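(* Work in the projective model of $\mathbf{Sol}$ geometry described in the context. Let $P_1=(1,0,0,0)$, $P_2=(1,a,b,c)$ with $a,b,c\in\mathbb{R}$, and $\sigma\in\mathbb{R}^+$. The translation-like Apollonius surface $\mathcal{AS}^\sigma_{P_1P_2}$ (the set of points $P=(1,x,y,z)$ with $\sigma\, d^t(P_1,P)=d^t(P,P_2)$) is given by the following implicit equations. (1) If $c\neq0$: for $z\neq0,c$: \[\frac{|c-z|}{|e^{c}-e^z|}\sqrt{(a-x)^2e^{2(c+z)}+(e^{c}-e^{z})^2+(b-y)^2}=\sigma\frac{|z|}{|e^{z}-1|}\sqrt{x^2e^{2z}+(e^{z}-1)^2+y^2};\] for $z=c$: \[\sqrt{(x-a)^2e^{2c}+(y-b)^2e^{-2c}}=\sigma\frac{|z|}{|e^{z}-1|}\sqrt{x^2e^{2z}+(e^{z}-1)^2+y^2};\] for $z=0$: \[\frac{|c|}{|e^{c}-1|}\sqrt{(a-x)^2e^{2c}+(e^{c}-1)^2+(b-y)^2}=\sigma\sqrt{x^2+y^2}.\] (2) If $c=0$: for $z\neq0$: \[\frac{|z|}{|e^z-1|}\sqrt{(a-x)^2e^{2z}+(e^{z}-1)^2+(b-y)^2}=\sigma\frac{|z|}{|e^{z}-1|}\sqrt{x^2e^{2z}+(e^{z}-1)^2+y^2};\] for $z=0$: \[\sqrt{(x-a)^2+(y-b)^2}=\sigma\sqrt{x^2+y^2}.\]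
   Context: $\mathbf{Sol}$ is modelled on $\mathbb{R}^3$ with points in homogeneous coordinates $(1,x,y,z)$. For $Q=(1,q_1,q_2,q_3)$ the translation $\mathbf{T}_Q$ acts on row vectors from the right by the matrix $\begin{pmatrix}1&q_1&q_2&q_3\\0&e^{-q_3}&0&0\\0&0&e^{q_3}&0\\0&0&0&1\end{pmatrix}$, i.e. $(1,a,b,c)\mapsto(1,q_1+ae^{-q_3},q_2+be^{q_3},q_3+c)$; it maps $E_0=(1,0,0,0)$ to $Q$. A translation curve starting at $E_0$ with unit initial tangent $(u,v,w)=(\cos\theta\cos\phi,\cos\theta\sin\phi,\sin\theta)$ solves $\dot x=ue^{-z},\ \dot y=ve^{z},\ \dot z=w$ from the origin: $x(t)=-\frac uw(e^{-wt}-1)$, $y(t)=\frac vw(e^{wt}-1)$, $z(t)=wt$ if $w\ne0$, and $x=ut,y=vt,z=0$ if $w=0$. Translation curves from $Q$ are the $\mathbf{T}_Q$-images of these. The translation distance $d^t(Q,P)$ is the length (parameter $t$) of the translation curve segment from $Q$ to $P$; equivalently $d^t(Q,P)=d^t(E_0,\mathbf{T}_Q^{-1}(P))$. For $\sigma\in\mathbb{R}^+$, the translation-like Apollonius surface of $P_1,P_2$ with parameter $\sigma$ is $\{P:\sigma\, d^t(P_1,P)=d^t(P,P_2)\}$. *)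

(* Defs.v *)
From Stdlib Require Import Reals Lra.
Open Scope R_scope.

(* A point (1,x,y,z) of Sol in homogeneous coordinates is represented by
   its affine part (x,y,z). *)
Definition pt := (R * R * R)%type.

Definition transl (Q P : pt) : pt :=
  let '(q1, q2, q3) := Q in
  let '(a, b, c) := P in
  (q1 + a * exp (- q3), q2 + b * exp q3, q3 + c).

(* Translation curve from E0 with unit initial tangent (u,v,w), at parameter t. *)
Definition tcurve (u v w t : R) : pt :=
  if Req_EM_T w 0 then (u * t, v * t, 0)
  else (- (u / w) * (exp (- (w * t)) - 1), (v / w) * (exp (w * t) - 1), w * t).

(* [tdist Q P t] : the translation curve segment from Q to P has length
   (parameter) t, i.e. d^t(Q,P) = t.  Translation curves from Q are the
   T_Q-images of the translation curves from E0. *)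
Definition tdist (Q P : pt) (t : R) : Prop :=
  0 <= t /\
  exists u v w : R, u ^ 2 + v ^ 2 + w ^ 2 = 1 /\ transl Q (tcurve u v w t) = P.

Definition apollonius (P1 P2 : pt) (sigma : R) (P : pt) : Prop :=
  exists t1 t2 : R, tdist P1 P t1 /\ tdist P P2 t2 /\ sigma * t1 = t2.

(* Main.v *)
Require Import Defs.
From Stdlib Require Import Reals Lra Psatz Setoid.
Open Scope R_scope.

Definition D (X Y Z : R) : R :=
  if Req_EM_T Z 0 then sqrt (X ^ 2 + Y ^ 2)
  else Rabs Z / Rabs (exp Z - 1) * sqrt (X ^ 2 * exp (2 * Z) + (exp Z - 1) ^ 2 + Y ^ 2).

Lemma D_0 X Y : D X Y 0 = sqrt (X ^ 2 + Y ^ 2).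
Proof. unfold D; destruct (Req_EM_T 0 0); [reflexivity | lra]. Qed.

Lemma D_nz X Y Z : Z <> 0 ->
  D X Y Z = Rabs Z / Rabs (exp Z - 1) * sqrt (X ^ 2 * exp (2 * Z) + (exp Z - 1) ^ 2 + Y ^ 2).
Proof. intro H; unfold D; destruct (Req_EM_T Z 0); [lra | reflexivity]. Qed.

Lemma exp2 u : exp (2 * u) = exp u * exp u.
Proof. rewrite <- exp_plus; f_equal; ring. Qed.

Lemma exp_minus u v : exp (u - v) = exp u / exp v.
Proof. unfold Rminus, Rdiv; rewrite exp_plus, exp_Ropp; reflexivity. Qed.

Lemma sqr_eq A B : 0 <= A -> 0 <= B -> A ^ 2 = B ^ 2 -> A = B.
Proof. intros; apply Rle_antisym; nra. Qed.

Lemma nonneg A B C : 0 <= Rabs A / Rabs B * sqrt C.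
Proof.
  unfold Rdiv; repeat apply Rmult_le_pos; [apply Rabs_pos| |apply sqrt_pos].
  destruct (Req_dec (Rabs B) 0) as [e|n].
  - rewrite e, Rinv_0; lra.
  - apply Rlt_le, Rinv_0_lt_compat; pose proof (Rabs_pos B); lra.
Qed.

Lemma sq_form A B C : B <> 0 -> 0 <= C ->
  (Rabs A / Rabs B * sqrt C) ^ 2 = A ^ 2 / B ^ 2 * C.
Proof.
  intros HB HC.
  assert (Rabs B <> 0) by (apply Rabs_no_R0; exact HB).
  replace ((Rabs A / Rabs B * sqrt C) ^ 2) with (Rabs A ^ 2 / Rabs B ^ 2 * sqrt C ^ 2)
    by (field; auto).
  rewrite !pow2_abs, pow2_sqrt by exact HC. reflexivity.
Qed.

Lemma pos3 A B C E : 0 <= A ^ 2 * (E * E) + B ^ 2 + C ^ 2.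
Proof. nra. Qed.

Lemma sq_pos u : u <> 0 -> 0 < u ^ 2.
Proof. intro h; destruct (Rtotal_order u 0) as [l|[e|g]]; [nra|contradiction|nra]. Qed.

Lemma expm1_nz Z : Z <> 0 -> exp Z - 1 <> 0.
Proof.
  intros H h. apply H. apply exp_inv. rewrite exp_0. lra.
Qed.

Lemma transl0 P : transl (0, 0, 0) P = P.
Proof.
  destruct P as [[p q] r]. simpl. rewrite Ropp_0, exp_0. f_equal; [f_equal|]; ring.
Qed.

Lemma tdist0_iff X Y Z t : tdist (0, 0, 0) (X, Y, Z) t <-> t = D X Y Z.
Proof.
  unfold tdist. setoid_rewrite transl0.
  split.
  - intros [Ht [u [v [w [Hu Hc]]]]].
    unfold tcurve in Hc. destruct (Req_EM_T w 0) as [Hw|Hw].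
    + injection Hc; intros; subst. rewrite D_0.
      replace ((u * t) ^ 2 + (v * t) ^ 2) with (t ^ 2 * (u ^ 2 + v ^ 2 + 0 ^ 2)) by ring.
      rewrite Hu, Rmult_1_r, sqrt_pow2 by exact Ht. reflexivity.
    + injection Hc; intros HZ HY HX.
      destruct (Req_dec Z 0) as [Z0|Z0].
      * rewrite Z0 in HZ |- *. assert (t = 0) by (destruct (Rmult_integral _ _ HZ); [lra|auto]).
        subst t. rewrite D_0. rewrite <- HX, <- HY.
        rewrite Rmult_0_r, Ropp_0, exp_0.
        replace ((- (u / w) * (1 - 1)) ^ 2 + (v / w * (1 - 1)) ^ 2) with 0 by ring.
        rewrite sqrt_0; reflexivity.
      * rewrite D_nz by exact Z0. subst X Y Z.
        pose proof (expm1_nz _ Z0) as HE.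
        pose proof (exp_pos (w * t)) as Ep.
        apply sqr_eq; [exact Ht| apply nonneg|].
        rewrite exp2. rewrite sq_form; [|auto|apply pos3].
        rewrite exp_Ropp.
        replace (t ^ 2) with (t ^ 2 * (u ^ 2 + v ^ 2 + w ^ 2)) at 1 by (rewrite Hu; ring).
        field. repeat split; auto; lra.
  - intro Ht. destruct (Req_dec Z 0) as [Z0|Z0].
    + subst Z. rewrite D_0 in Ht.
      assert (Ht2 : t ^ 2 = X ^ 2 + Y ^ 2) by (rewrite Ht; apply pow2_sqrt; nra).
      split; [rewrite Ht; apply sqrt_pos|].
      destruct (Req_dec t 0) as [t0|t0].
      * assert (X = 0 /\ Y = 0) as [-> ->] by (subst t; nra).
        exists 1, 0, 0. split; [ring|]. unfold tcurve.
        destruct (Req_EM_T 0 0); [|lra]. rewrite t0. f_equal; try f_equal; ring.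
      * exists (X / t), (Y / t), 0. split.
        -- replace ((X / t) ^ 2 + (Y / t) ^ 2 + 0 ^ 2) with ((X ^ 2 + Y ^ 2) / t ^ 2)
             by (field; auto).
           rewrite <- Ht2. field; auto.
        -- unfold tcurve. destruct (Req_EM_T 0 0); [|lra]. f_equal; try f_equal; field; auto.
    + rewrite D_nz in Ht by exact Z0.
      pose proof (expm1_nz _ Z0) as HE.
      pose proof (exp_pos Z) as Ep.
      rewrite exp2 in Ht.
      set (E := exp Z) in *.
      set (S := X ^ 2 * (E * E) + (E - 1) ^ 2 + Y ^ 2) in *.
      assert (HS : 0 < S) by (unfold S; nra).
      assert (Ht2 : t ^ 2 = Z ^ 2 / (E - 1) ^ 2 * S)
        by (rewrite Ht; apply sq_form; [auto| lra]).
      assert (Htp : 0 < t ^ 2).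
      { rewrite Ht2. apply Rmult_lt_0_compat; [|exact HS].
        apply Rdiv_lt_0_compat; apply sq_pos; auto. }
      assert (t0 : t <> 0) by (intro h; rewrite h in Htp; nra).
      split; [rewrite Ht; apply nonneg|].
      exists (X * E * (Z / t) / (E - 1)), (Y * (Z / t) / (E - 1)), (Z / t). split.
      * replace ((X * E * (Z / t) / (E - 1)) ^ 2 + (Y * (Z / t) / (E - 1)) ^ 2 + (Z / t) ^ 2)
          with ((Z ^ 2 / (E - 1) ^ 2 * S) / t ^ 2) by (unfold S; field; auto).
        rewrite <- Ht2. field; auto.
      * unfold tcurve. destruct (Req_EM_T (Z / t) 0) as [h|h].
        { exfalso. apply Z0. apply (Rmult_eq_reg_r (/ t)); [|apply Rinv_neq_0_compat; auto].
          rewrite Rmult_0_l. exact h. }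
        replace (Z / t * t) with Z by (field; auto).
        rewrite exp_Ropp. fold E.
        f_equal; try f_equal; field; repeat split; auto; lra.
Qed.

Lemma tshift x y z a b c t :
  tdist (x, y, z) (a, b, c) t <->
  tdist (0, 0, 0) ((a - x) * exp z, (b - y) * exp (- z), c - z) t.
Proof.
  unfold tdist. setoid_rewrite transl0.
  pose proof (exp_pos z) as Ep.
  split; intros [Ht [u [v [w [Hu Hc]]]]]; split; auto; exists u, v, w; split; auto;
    destruct (tcurve u v w t) as [[p q] r]; simpl in Hc |- *;
    injection Hc; intros; subst.
  - rewrite exp_Ropp. f_equal; [f_equal|]; field; lra.
  - rewrite exp_Ropp. f_equal; [f_equal|]; field; lra.
Qed.

Lemma AS_iff a b c sigma x y z :
  apollonius (0, 0, 0) (a, b, c) sigma (x, y, z) <->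
  D ((a - x) * exp z) ((b - y) * exp (- z)) (c - z) = sigma * D x y z.
Proof.
  unfold apollonius. split.
  - intros [t1 [t2 [H1 [H2 H3]]]].
    apply tdist0_iff in H1. apply tshift, tdist0_iff in H2. subst. symmetry; exact H3.
  - intro H. exists (D x y z), (D ((a - x) * exp z) ((b - y) * exp (- z)) (c - z)).
    split; [apply tdist0_iff; reflexivity|].
    split; [apply tshift, tdist0_iff; reflexivity|]. symmetry; exact H.
Qed.

Lemma L1 a b c x y z : z <> c ->
  D ((a - x) * exp z) ((b - y) * exp (- z)) (c - z) =
  Rabs (c - z) / Rabs (exp c - exp z) *
    sqrt ((a - x) ^ 2 * exp (2 * (c + z)) + (exp c - exp z) ^ 2 + (b - y) ^ 2).
Proof.
  intro Hzc. assert (Hcz : c - z <> 0) by lra.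
  rewrite D_nz by exact Hcz.
  pose proof (expm1_nz _ Hcz) as HE.
  assert (HE2 : exp c - exp z <> 0).
  { intro h. apply Hzc. symmetry. apply exp_inv. lra. }
  pose proof (exp_pos z) as Ez. pose proof (exp_pos c) as Ec.
  apply sqr_eq; [apply nonneg|apply nonneg|].
  rewrite !exp2. rewrite !sq_form; [| auto | apply pos3 | auto | apply pos3].
  rewrite exp_minus, exp_plus, exp_Ropp in *.
  field. repeat split; lra.
Qed.

Theorem lemma3p6 (a b c sigma : R) (hs : 0 < sigma) (x y z : R) :
  let AS := apollonius (0, 0, 0) (a, b, c) sigma (x, y, z) in
  (* (1) c <> 0 *)
  (c <> 0 -> z <> 0 -> z <> c ->
     (AS <->
      Rabs (c - z) / Rabs (exp c - exp z) *
        sqrt ((a - x) ^ 2 * exp (2 * (c + z)) + (exp c - exp z) ^ 2 + (b - y) ^ 2)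
      = sigma * (Rabs z / Rabs (exp z - 1)) *
        sqrt (x ^ 2 * exp (2 * z) + (exp z - 1) ^ 2 + y ^ 2))) /\
  (c <> 0 -> z = c ->
     (AS <->
      sqrt ((x - a) ^ 2 * exp (2 * c) + (y - b) ^ 2 * exp (- (2 * c)))
      = sigma * (Rabs z / Rabs (exp z - 1)) *
        sqrt (x ^ 2 * exp (2 * z) + (exp z - 1) ^ 2 + y ^ 2))) /\
  (c <> 0 -> z = 0 ->
     (AS <->
      Rabs c / Rabs (exp c - 1) *
        sqrt ((a - x) ^ 2 * exp (2 * c) + (exp c - 1) ^ 2 + (b - y) ^ 2)
      = sigma * sqrt (x ^ 2 + y ^ 2))) /\
  (* (2) c = 0 *)
  (c = 0 -> z <> 0 ->
     (AS <->
      Rabs z / Rabs (exp z - 1) *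
        sqrt ((a - x) ^ 2 * exp (2 * z) + (exp z - 1) ^ 2 + (b - y) ^ 2)
      = sigma * (Rabs z / Rabs (exp z - 1)) *
        sqrt (x ^ 2 * exp (2 * z) + (exp z - 1) ^ 2 + y ^ 2))) /\
  (c = 0 -> z = 0 ->
     (AS <->
      sqrt ((x - a) ^ 2 + (y - b) ^ 2) = sigma * sqrt (x ^ 2 + y ^ 2))).
Proof.
  cbv zeta. rewrite AS_iff.
  split; [|split; [|split; [|split]]].
  - intros Hc Hz Hzc. rewrite L1 by auto. rewrite D_nz by exact Hz.
    rewrite Rmult_assoc. tauto.
  - intros Hc Hz. subst z. replace (c - c) with 0 by ring. rewrite D_0, D_nz by exact Hc.
    replace (((a - x) * exp c) ^ 2 + ((b - y) * exp (- c)) ^ 2)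
      with ((x - a) ^ 2 * exp (2 * c) + (y - b) ^ 2 * exp (- (2 * c))).
    + rewrite Rmult_assoc. tauto.
    + replace (- (2 * c)) with (2 * (- c)) by ring. rewrite !exp2. ring.
  - intros Hc Hz. subst z. rewrite L1 by auto. rewrite D_0.
    replace (c - 0) with c by ring. replace (c + 0) with c by ring. rewrite exp_0. tauto.
  - intros Hc Hz. subst c. rewrite L1 by auto. rewrite D_nz by exact Hz.
    rewrite exp_0, Rabs_minus_sym, Rminus_0_r, (Rabs_minus_sym 1).
    replace ((1 - exp z) ^ 2) with ((exp z - 1) ^ 2) by ring.
    replace (0 + z) with z by ring.
    rewrite Rmult_assoc. tauto.
  - intros Hc Hz. subst c z. rewrite Ropp_0, exp_0. replace (0 - 0) with 0 by ring.
    rewrite !D_0.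
    replace (((a - x) * 1) ^ 2 + ((b - y) * 1) ^ 2) with ((x - a) ^ 2 + (y - b) ^ 2) by ring.
    tauto.
Qed.
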